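(* Let $n=2\ell$ where $\ell\ge3$ is odd. For $0\le k\le n-1$ let $p_k:=\left(1,\cos\frac{2\pi k}{n},\sin\frac{2\pi k}{n}\right)\in\mathbb{R}^3$, and let $X:=(\langle p_k,p_{k'}\rangle)_{0\le k,k'\le n-1}$. Then $X$ is a Gram-Lorentz matrix that is not completely positive; in particular $X$ is completely positive semidefinite but not completely positive.
   Context: The Lorentz cone is $\mathcal{L}_m:=\{(c,x)\in\mathbb{R}\times\mathbb{R}^{m-1}: c\ge\|x\|\}$. A real symmetric $n\times n$ matrix is Gram-Lorentz if it is the Gram matrix of vectors lying in some $\mathcal{L}_m$. An $n\times n$ matrix $X$ is completely positive if $X_{ij}=\langle a_i,a_j\rangle$ for some entrywise nonnegative vectors $a_1,\dots,a_n\in\mathbb{R}^k_+$, and completely positive semidefinite if $X_{ij}=\mathrm{Tr}(P_iP_j)$ for some Hermitian positive semidefinite $d\times d$ matrices $P_1,\dots,P_n$ (some $d\ge1$). *)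

(* Defs.v *)
From HB Require Import structures.
From mathcomp Require Import all_boot all_order all_algebra.
From mathcomp Require Import all_classical all_reals.
From mathcomp Require Import complex.
From mathcomp Require Import trigo.
Set Implicit Arguments. Unset Strict Implicit. Unset Printing Implicit Defensive.
Import Order.TTheory GRing.Theory Num.Theory.
Local Open Scope ring_scope.

Definition dotv (R : realType) (m : nat) (u v : 'rV[R]_m) : R :=
  \sum_(i < m) u 0 i * v 0 i.

Definition lorentz_cone (R : realType) (m : nat) (v : 'rV[R]_m.+1) : Prop :=
  Num.sqrt (\sum_(i < m) (v 0 (lift ord0 i)) ^+ 2) <= v 0 ord0.

Definition gram_lorentz (R : realType) (n : nat) (X : 'M[R]_n) : Prop :=
  exists (m : nat) (a : 'I_n -> 'rV[R]_m.+1),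
    (forall i, lorentz_cone (a i)) /\
    (forall i j, X i j = dotv (a i) (a j)).

Definition completely_positive (R : realType) (n : nat) (X : 'M[R]_n) : Prop :=
  exists (k : nat) (a : 'I_n -> 'rV[R]_k),
    (forall i l, 0 <= a i 0 l) /\
    (forall i j, X i j = dotv (a i) (a j)).

Definition adjmx (R : rcfType) (m n : nat) (A : 'M[R[i]]_(m, n)) : 'M[R[i]]_(n, m) :=
  (map_mx Num.conj A)^T.

Definition herm_psd (R : rcfType) (d : nat) (P : 'M[R[i]]_d) : Prop :=
  adjmx P = P /\ forall v : 'cV[R[i]]_d, 0 <= (adjmx v *m P *m v) 0 0.

Definition cpsd (R : realType) (n : nat) (X : 'M[R]_n) : Prop :=
  exists (d : nat) (P : 'I_n -> 'M[R[i]]_d),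
    (0 < d)%N /\ (forall i, herm_psd (P i)) /\
    (forall i j, \tr (P i *m P j) = real_complex R (X i j)).

Definition pk (R : realType) (n : nat) (k : 'I_n) : 'rV[R]_3 :=
  let t := 2 * pi * k%:R / n%:R in
  \row_(j < 3) [:: 1; cos t; sin t]`_j.

Definition Xmat (R : realType) (n : nat) : 'M[R]_n :=
  \matrix_(k < n, k' < n) dotv (pk R k) (pk R k').

(* Main.v *)
Require Import Defs.
From HB Require Import structures.
From mathcomp Require Import all_boot all_order all_algebra.
From mathcomp Require Import all_classical all_reals.
From mathcomp Require Import complex trigo.
From mathcomp Require Import lra ring zify.
Import Order.TTheory GRing.Theory Num.Theory.
Local Open Scope ring_scope.
Set Implicit Arguments. Unset Strict Implicit.

Section S.
Variable R : realType.

Lemma dotvDl m (u v w : 'rV[R]_m) : dotv (u + v) w = dotv u w + dotv v w.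
Proof. by rewrite /dotv -big_split; apply: eq_bigr => i _; rewrite mxE mulrDl. Qed.
Lemma dotvZl m c (u w : 'rV[R]_m) : dotv (c *: u) w = c * dotv u w.
Proof. by rewrite /dotv mulr_sumr; apply: eq_bigr => i _; rewrite mxE mulrA. Qed.
Lemma dotv0l m (w : 'rV[R]_m) : dotv 0 w = 0.
Proof. by rewrite /dotv big1 // => i _; rewrite mxE mul0r. Qed.
Lemma dotvC m (u w : 'rV[R]_m) : dotv u w = dotv w u.
Proof. by rewrite /dotv; apply: eq_bigr => i _; rewrite mulrC. Qed.

Definition lc n m (a : 'I_n -> 'rV[R]_m) (s : seq (R * 'I_n)) :=
  \sum_(x <- s) x.1 *: a x.2.

Lemma dotv_lcl n m (a : 'I_n -> 'rV[R]_m) s w :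
  dotv (lc a s) w = \sum_(x <- s) x.1 * dotv (a x.2) w.
Proof.
rewrite /lc; elim: s => [|x s IH]; first by rewrite !big_nil dotv0l.
by rewrite !big_cons dotvDl dotvZl IH.
Qed.

Lemma transfer n m m' (a : 'I_n -> 'rV[R]_m) (f : 'I_n -> 'rV[R]_m')
  (H : forall i j, dotv (a i) (a j) = dotv (f i) (f j)) s :
  dotv (lc a s) (lc a s) = dotv (lc f s) (lc f s).
Proof.
rewrite !dotv_lcl; apply: eq_bigr => x _; congr (_ * _).
rewrite dotvC [RHS]dotvC !dotv_lcl; apply: eq_bigr => y _.
by rewrite H.
Qed.

Lemma dotv_eq0 m (u : 'rV[R]_m) : dotv u u = 0 -> u = 0.
Proof.
move=> /eqP; rewrite /dotv psumr_eq0 => [/allP H|i _]; last by rewrite -expr2 sqr_ge0.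
apply/rowP => j; rewrite mxE; have /implyP := H j (mem_index_enum j).
by move=> /(_ isT); rewrite mulf_eq0 orbb => /eqP.
Qed.

Lemma key (c x0 xl x1 y1 x2 z2 : R) : 0 < c -> c < 1 ->
  0 <= x0 -> 0 <= xl -> 0 <= x1 -> 0 <= y1 -> 0 <= x2 -> 0 <= z2 ->
  x0 * xl = 0 -> x1 * y1 = 0 -> x2 * z2 = 0 ->
  x0 + xl = x1 + y1 -> x2 + z2 = x1 + y1 ->
  x0 + x2 = (1 + c) * x1 + (1 - c) * y1 -> x1 + y1 = 0.
Proof.
move=> c0 c1 h0 h1 h2 h3 h4 h5 /eqP e1 /eqP e2 /eqP e3 f1 f2 f3.
move: e1 e2 e3; rewrite !mulf_eq0.
case/orP=> /eqP E1; case/orP=> /eqP E2; case/orP=> /eqP E3; subst; nra.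
Qed.
Lemma dotpk n (i j : 'I_n) : dotv (pk R i) (pk R j) =
  1 + cos (2 * pi * i%:R / n%:R) * cos (2 * pi * j%:R / n%:R)
    + sin (2 * pi * i%:R / n%:R) * sin (2 * pi * j%:R / n%:R).
Proof. rewrite /dotv !big_ord_recr big_ord0 /= !mxE /=. lra. Qed.

Lemma tE l (k : nat) : (0 < l)%N -> 2 * pi * k%:R / (2 * l)%:R = k%:R * (pi / l%:R) :> R.
Proof. move=> l0; rewrite natrM; field; rewrite pnatr_eq0 -lt0n l0 //. Qed.

Lemma dot_nn0 m (u v : 'rV[R]_m) : (forall r, 0 <= u 0 r) -> (forall r, 0 <= v 0 r) ->
  dotv u v = 0 -> forall r, u 0 r * v 0 r = 0.
Proof.
move=> hu hv /eqP; rewrite /dotv psumr_eq0 => [/allP H r|i _]; last by rewrite mulr_ge0.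
by have /implyP := H r (mem_index_enum r); move=> /(_ isT) /eqP.
Qed.

Lemma notcp l : (3 <= l)%N -> ~ completely_positive (Xmat R (2 * l)).
Proof.
move=> hl [K [a [ha hX]]].
have l0 : (0 < l)%N by lia.
have H i j : dotv (a i) (a j) = dotv (pk R i) (pk R j) by rewrite -hX mxE.
pose th : R := pi / l%:R.
have pi0 := pi_gt0 R.
have lR : 3%:R <= l%:R :> R by rewrite ler_nat.
have th0 : 0 < th by rewrite divr_gt0 // ltr0n.
have thpi : th < pi / 2.
  rewrite /th ltr_pdivrMr ?ltr0n //; nra.
have c0 : 0 < cos th by apply: cos_gt0_pihalf; apply/andP; split => //; lra.
have s0 : 0 < sin th by apply: sin_gt0_pi; apply/andP; split => //; lra.
have c1 : cos th < 1 by have := cos2Dsin2 th; nra.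
have hpi : l%:R * th = pi by rewrite /th mulrC divfK // pnatr_eq0 -lt0n.
pose i0 := @Ordinal (2 * l) 0 ltac:(lia).
pose i1 := @Ordinal (2 * l) 1 ltac:(lia).
pose i2 := @Ordinal (2 * l) 2 ltac:(lia).
pose iL := @Ordinal (2 * l) l ltac:(lia).
pose iL1 := @Ordinal (2 * l) l.+1 ltac:(lia).
pose iL2 := @Ordinal (2 * l) l.+2 ltac:(lia).
have eL1 : (l.+1)%:R * th = th + pi by rewrite -addn1 natrD mulrDl hpi mul1r addrC.
have eL2 : (l.+2)%:R * th = (th + th) + pi by rewrite -addn2 natrD mulrDl hpi addrC mulr2n mulrDl mul1r.
have e2 : 2%:R * th = th + th by rewrite mulr2n mulrDl mul1r.
have pkE (k : 'I_(2 * l)) j : pk R k 0 j = [:: 1; cos (k%:R * th); sin (k%:R * th)]`_j.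
  by rewrite mxE tE.
have rel (s : seq (R * 'I_(2 * l))) : lc (fun k => pk R k) s = 0 -> forall r, \sum_(x <- s) x.1 * a x.2 0 r = 0.
  move=> hs r; have := transfer H s; rewrite hs dotv0l => /dotv_eq0 /rowP /(_ r).
  by rewrite /lc !mxE summxE => E; rewrite -[RHS]E; apply: eq_bigr => x _; rewrite mxE.
have R1 := rel [:: (1 : R, i0); (1, iL); (-1, i1); (-1, iL1)].
have R2 := rel [:: (1 : R, i2); (1, iL2); (-1, i1); (-1, iL1)].
have R3 := rel [:: (1 : R, i0); (1, i2); (-(1 + cos th), i1); (-(1 - cos th), iL1)].
have E0 : 0%:R * th = 0 by rewrite mul0r.
have E1 : 1%:R * th = th by rewrite mul1r.
have P1 : lc (fun k => pk R k) [:: (1 : R, i0); (1, iL); (-1, i1); (-1, iL1)] = 0.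
{ apply/rowP => j; rewrite /lc !big_cons big_nil !mxE /= !tE //.
  rewrite ?E0 ?E1 ?e2 ?eL1 ?eL2 ?hpi.
  case: j => [[|[|[|j]]] hj]; last by exfalso; move: hj; rewrite !ltnS ltn0.
  all: rewrite /= ?cos0 ?sin0 ?cospi ?sinpi ?cosDpi ?sinDpi ?cosD ?sinD; clear -E0.
  all: lra. }
have P2 : lc (fun k => pk R k) [:: (1 : R, i2); (1, iL2); (-1, i1); (-1, iL1)] = 0.
{ apply/rowP => j; rewrite /lc !big_cons big_nil !mxE /= !tE //.
  rewrite ?E0 ?E1 ?e2 ?eL1 ?eL2 ?hpi.
  case: j => [[|[|[|j]]] hj]; last by exfalso; move: hj; rewrite !ltnS ltn0.
  all: rewrite /= ?cos0 ?sin0 ?cospi ?sinpi ?cosDpi ?sinDpi ?cosD ?sinD; clear -E0.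
  all: lra. }
have P3 : lc (fun k => pk R k) [:: (1 : R, i0); (1, i2); (-(1 + cos th), i1); (-(1 - cos th), iL1)] = 0.
{ apply/rowP => j; rewrite /lc !big_cons big_nil !mxE /= !tE //.
  rewrite ?E0 ?E1 ?e2 ?eL1 ?eL2 ?hpi.
  case: j => [[|[|[|j]]] hj]; last by exfalso; move: hj; rewrite !ltnS ltn0.
  all: rewrite /= ?cos0 ?sin0 ?cospi ?sinpi ?cosDpi ?sinDpi ?cosD ?sinD; clear -E0.
  all: have := cos2Dsin2 th; nra. }
have R1' := R1 P1; have R2' := R2 P2; have R3' := R3 P3.
have Z (i j : 'I_(2 * l)) : (j = i + l :> nat)%N -> forall r, a i 0 r * a j 0 r = 0.
  move=> hij; apply: dot_nn0 => //; rewrite H dotpk !tE // hij natrD (mulrDl _ l%:R) hpi.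
  by rewrite cosDpi sinDpi; have := cos2Dsin2 (i%:R * th); clear; nra.
have U r : a i1 0 r + a iL1 0 r = 0.
  have := R1' r; have := R2' r; have := R3' r; rewrite !big_cons big_nil /= => h3 h2 h1.
  apply: (@key (cos th) (a i0 0 r) (a iL 0 r) _ _ (a i2 0 r) (a iL2 0 r)) => //;
    try exact: ha.
  - exact: (Z i0 iL (erefl _) r).
  - exact: (Z i1 iL1 (erefl _) r).
  - exact: (Z i2 iL2 (erefl _) r).
  - by move: h1; clear; lra.
  - by move: h2; clear; lra.
  - by move: h3; clear; lra.
have := H i1 i1; rewrite dotpk /dotv big1 => [|r _].
  rewrite !tE // E1; have := cos2Dsin2 th; clear; lra.
have := U r; have := ha i1 r; have := ha iL1 r; clear; nra.
Qed.
Lemma conjE (a b : R) : Num.conj (Complex a b) = Complex a (- b).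
Proof. reflexivity. Qed.

Definition Qm (c s : R) : 'M[R]_2 :=
  \matrix_(i < 2, j < 2) ((Num.sqrt 2)^-1 * nth 0 (nth [::] [:: [:: 1 + s; c]; [:: c; 1 - s]] i) j).

Lemma herm c s (hcs : c ^+ 2 + s ^+ 2 = 1) : herm_psd (map_mx (real_complex R) (Qm c s)).
Proof.
split.
- apply/matrixP => i j; rewrite !mxE conjE oppr0.
  by case: i => [[|[|i]] hi]; case: j => [[|[|j]] hj].
- move=> v. rewrite !mxE !big_ord_recl big_ord0 /= !mxE !big_ord_recl big_ord0 /= !mxE /=.
  case: (v ord0 ord0) => x1 y1; case: (v (lift ord0 ord0) ord0) => x2 y2.
  rewrite big_ord0 !conjE.
  have h0 : 0 <= (Num.sqrt 2)^-1 :> R by rewrite invr_ge0 sqrtr_ge0.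
  move: (Num.sqrt 2)^-1 h0 => h h0.
  rewrite /real_complex_def. simpc.
  apply/andP; split; first by apply/eqP; ring.
  pose B := (1 + s) * (x1 ^+ 2 + y1 ^+ 2) + 2 * c * (x1 * x2 + y1 * y2) + (1 - s) * (x2 ^+ 2 + y2 ^+ 2).
  have E : 2 * B = ((1 + s) * x1 + c * x2) ^+ 2 + (c * x1 + (1 - s) * x2) ^+ 2
     + ((1 + s) * y1 + c * y2) ^+ 2 + (c * y1 + (1 - s) * y2) ^+ 2
     + (1 - s ^+ 2 - c ^+ 2) * (x1 ^+ 2 + x2 ^+ 2 + y1 ^+ 2 + y2 ^+ 2) by rewrite /B; ring.
  have HB : 0 <= B.
    have z : 1 - s ^+ 2 - c ^+ 2 = 0 by lra.
    move: E; rewrite z mul0r addr0 => E.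
    have := sqr_ge0 ((1 + s) * x1 + c * x2); have := sqr_ge0 (c * x1 + (1 - s) * x2).
    have := sqr_ge0 ((1 + s) * y1 + c * y2); have := sqr_ge0 (c * y1 + (1 - s) * y2).
    lra.
  have := mulr_ge0 h0 HB; rewrite /B; lra.
Qed.

Lemma trQ c s c' s' : \tr (Qm c s *m Qm c' s') = 1 + c * c' + s * s'.
Proof.
rewrite /mxtrace !big_ord_recl big_ord0 !mxE !big_ord_recl big_ord0 !mxE /=.
have h2 : (Num.sqrt 2)^-1 * (Num.sqrt 2)^-1 = 2^-1 :> R.
  by rewrite -invfM -expr2 sqr_sqrtr // ler0n.
move: (Num.sqrt 2)^-1 h2 => h h2.
apply: (@eq_trans _ _ ((h * h) * (2 * (1 + c * c' + s * s')))); first by rewrite big_ord0; ring.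
by rewrite h2 mulrA mulVf ?mul1r // pnatr_eq0.
Qed.

Lemma cpsdX n : cpsd (Xmat R n).
Proof.
exists 2%N, (fun k => map_mx (real_complex R) (Qm (cos (2 * pi * k%:R / n%:R)) (sin (2 * pi * k%:R / n%:R)))).
split => //; split; first by move=> i; apply: herm; exact: cos2Dsin2.
by move=> i j; rewrite -map_mxM trace_map_mx trQ mxE dotpk.
Qed.
Lemma gl n : gram_lorentz (Xmat R n).
Proof.
exists 2%N, (fun k => pk R k); split.
- move=> i; rewrite /lorentz_cone !big_ord_recr big_ord0 /= !mxE /=.
  by rewrite add0r cos2Dsin2 sqrtr1.
- by move=> i j; rewrite mxE.
Qed.
End S.

Theorem corollary4p11 (R : realType) (l : nat) (hl : (3 <= l)%N) (hodd : odd l) :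
  gram_lorentz (Xmat R (2 * l)) /\ ~ completely_positive (Xmat R (2 * l)) /\
  cpsd (Xmat R (2 * l)).
Proof.
split; first exact: gl.
split; first exact: notcp.
exact: cpsdX.
Qed.
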